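(* Let $x_s<x_t$ be integers, let $C\ge 0$, and let $f:[x_s,x_t]\to\mathbb{R}$ be such that $([x_s,x_t],f)$ is an Ameso($C$) pair. If there exist $x',z_s,z_t\in[x_s,x_t]$ with $z_s<x'<z_t$, $f(z_s)-f(x')\ge C$ and $f(z_t)-f(x')\ge C$, then $\min_{y\in[z_s,z_t]}f(y)=\min_{y\in[x_s,x_t]}f(y)$.
   Context: For integers $a\le b$, $[a,b]$ denotes the set of integers $\{a,\dots,b\}$. Floors and ceilings of vectors are taken componentwise. A set $D^n\subseteq\mathbb{Z}^n$ is an Ameso set if $\lceil(\vec x+\vec y)/2\rceil,\lfloor(\vec x+\vec y)/2\rfloor\in D^n$ for all $\vec x,\vec y\in D^n$. For $C\ge 0$, $(D^n,f)$ is an Ameso($C$) pair if $D^n$ is an Ameso set, $f:D^n\to\mathbb{R}$ is bounded below, and $f(\vec x)+f(\vec y)+C\ge f(\lceil(\vec x+\vec y)/2\rceil)+f(\lfloor(\vec x+\vec y)/2\rfloor)$ for all $\vec x,\vec y\in D^n$. *)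

(* Defs.v *)
From Stdlib Require Import Reals ZArith Lia Lra.
Open Scope R_scope.

Definition in_Zint (a b x : Z) : Prop := (a <= x <= b)%Z.

(* Componentwise (n = 1) floor and ceiling of (x+y)/2. *)
Definition mid_floor (x y : Z) : Z := Z.div (x + y) 2.
Definition mid_ceil (x y : Z) : Z := (- Z.div (- (x + y)) 2)%Z.

Definition Ameso_set (D : Z -> Prop) : Prop :=
  forall x y, D x -> D y -> D (mid_ceil x y) /\ D (mid_floor x y).

(* (D, f) is an Ameso(C) pair; f is only relevant on D. *)
Definition Ameso_pair (C : R) (D : Z -> Prop) (f : Z -> R) : Prop :=
  Ameso_set D /\
  (exists m : R, forall x, D x -> m <= f x) /\
  (forall x y, D x -> D y ->
     f x + f y + C >= f (mid_ceil x y) + f (mid_floor x y)).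

Definition is_min_on (a b : Z) (f : Z -> R) (m : R) : Prop :=
  (exists y, in_Zint a b y /\ f y = m) /\
  (forall y, in_Zint a b y -> m <= f y).

(* Main.v *)
Require Import Defs.
From Stdlib Require Import Reals ZArith.
From Stdlib Require Import Lia Lra.
Open Scope R_scope.

Lemma rmax (f : Z -> R) (u : Z) (n : nat) :
  exists z, (u <= z <= u + Z.of_nat n)%Z /\
    (forall t, (u <= t <= u + Z.of_nat n)%Z -> f t <= f z) /\
    (forall t, (z < t <= u + Z.of_nat n)%Z -> f t < f z).
Proof.
  induction n as [|n IH].
  - exists u. split; [lia|]. split.
    + intros t Ht. assert (t = u) by lia. subst. lra.
    + intros t Ht. lia.
  - destruct IH as [z0 [Hz0 [Hm Hr]]].
    destruct (Rle_lt_dec (f z0) (f (u + Z.of_nat (S n))%Z)) as [Hle|Hlt].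
    + exists (u + Z.of_nat (S n))%Z. split; [lia|]. split.
      * intros t Ht.
        destruct (Z.eq_dec t (u + Z.of_nat (S n))) as [->|Hne]; [lra|].
        assert (f t <= f z0) by (apply Hm; lia). lra.
      * intros t Ht. lia.
    + exists z0. split; [lia|]. split.
      * intros t Ht.
        destruct (Z.eq_dec t (u + Z.of_nat (S n))) as [->|Hne]; [lra|].
        apply Hm; lia.
      * intros t Ht.
        destruct (Z.eq_dec t (u + Z.of_nat (S n))) as [->|Hne]; [lra|].
        apply Hr; lia.
Qed.

Lemma keyL (D : Z -> Prop) (f : Z -> R) (C : R)
  (HE : forall p c, D p -> D (2*c-p)%Z -> f p + f (2*c-p)%Z + C >= 2 * f c)
  (HI : forall a b t, D a -> D b -> (a <= t <= b)%Z -> D t)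
  (HC0 : 0 <= C) (u z w : Z) : D u -> D w -> (u < z < w)%Z -> f z >= f u + C -> f w >= f u.
Proof.
  intros Du Dw Hz Hf.
  destruct (rmax f u (Z.to_nat (w - 1 - u))) as [zs [Hzs [Hm Hr]]].
  rewrite Z2Nat.id in Hzs, Hm, Hr by lia.
  replace (u + (w - 1 - u))%Z with (w - 1)%Z in Hzs, Hm, Hr by lia.
  assert (Hfz : f z <= f zs) by (apply Hm; lia).
  assert (Hzu : (u < zs)%Z).
  { destruct (Z.eq_dec zs u) as [->|Hne]; [|lia].
    exfalso. assert (f z < f u) by (apply Hr; lia). lra. }
  destruct (Z_le_gt_dec (u + w) (2 * zs)) as [H1|H1].
  - set (p := (2 * zs - w)%Z).
    assert (Dp : D p) by (apply (HI u w _ Du Dw); unfold p; lia).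
    assert (Hp : f p <= f zs) by (apply Hm; unfold p; lia).
    assert (E : (2 * zs - p)%Z = w) by (unfold p; lia).
    pose proof (HE p zs Dp) as H. rewrite E in H. specialize (H Dw). lra.
  - set (q := (2 * zs - u)%Z).
    assert (Dq : D q) by (apply (HI u w _ Du Dw); unfold q; lia).
    assert (Hq : f q < f zs) by (apply Hr; unfold q; lia).
    pose proof (HE u zs Du Dq) as H. fold q in H. lra.
Qed.

Theorem corollary4 (xs xt : Z) (C : R) (f : Z -> R) :
  (xs < xt)%Z -> 0 <= C ->
  Ameso_pair C (in_Zint xs xt) f ->
  forall x' zs zt : Z,
    in_Zint xs xt x' -> in_Zint xs xt zs -> in_Zint xs xt zt ->
    (zs < x')%Z -> (x' < zt)%Z ->
    f zs - f x' >= C -> f zt - f x' >= C ->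
    forall m1 m2 : R,
      is_min_on zs zt f m1 -> is_min_on xs xt f m2 -> m1 = m2.
Proof.
  intros Hx HC [_ [_ HA]] x' zs zt Hx' Hzs Hzt H1 H2 Hf1 Hf2 m1 m2
    [[y1 [Hy1 Hm1]] Hmin1] [[y2 [Hy2 Hm2]] Hmin2].
  unfold in_Zint in *.
  assert (HE : forall p c, in_Zint xs xt p -> in_Zint xs xt (2*c-p)%Z ->
            f p + f (2*c-p)%Z + C >= 2 * f c).
  { intros p c Dp Dq. pose proof (HA p (2*c-p)%Z Dp Dq) as H.
    assert (Ef : mid_floor p (2*c-p) = c).
    { unfold mid_floor. replace (p + (2*c-p))%Z with (c*2)%Z by lia.
      apply Z.div_mul. lia. }
    assert (Ec : mid_ceil p (2*c-p) = c).
    { unfold mid_ceil. replace (- (p + (2*c-p)))%Z with ((-c)*2)%Z by lia.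
      rewrite Z.div_mul by lia. lia. }
    rewrite Ef, Ec in H. lra. }
  assert (HI : forall a b t, in_Zint xs xt a -> in_Zint xs xt b -> (a <= t <= b)%Z ->
            in_Zint xs xt t) by (unfold in_Zint; intros; lia).
  set (g := fun t => f (- t)%Z).
  assert (HEg : forall p c, in_Zint (-xt) (-xs) p -> in_Zint (-xt) (-xs) (2*c-p)%Z ->
            g p + g (2*c-p)%Z + C >= 2 * g c).
  { intros p c Dp Dq. unfold g.
    assert (H : f (- p)%Z + f (2 * (- c) - (- p))%Z + C >= 2 * f (- c)%Z).
    { apply HE; unfold in_Zint in *; lia. }
    replace (- (2 * c - p))%Z with (2 * - c - - p)%Z by lia. exact H. }
  assert (HIg : forall a b t, in_Zint (-xt) (-xs) a -> in_Zint (-xt) (-xs) b ->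
            (a <= t <= b)%Z -> in_Zint (-xt) (-xs) t) by (unfold in_Zint; intros; lia).
  assert (Hle : m2 <= m1) by (rewrite <- Hm1; apply Hmin2; lia).
  assert (f y2 >= m1).
  { destruct (Z_le_gt_dec zs y2) as [A|A]; destruct (Z_le_gt_dec y2 zt) as [B|B].
    - apply Rle_ge. apply Hmin1. lia.
    -
      assert (Hx'm : m1 <= f x') by (apply Hmin1; lia).
      destruct (Z.eq_dec y1 zt) as [E|E].
      + pose proof (keyL _ f C HE HI HC x' zt y2) as K.
        assert (f y2 >= f x') by (apply K; unfold in_Zint; try lia; lra). lra.
      + pose proof (keyL _ f C HE HI HC y1 zt y2) as K.
        rewrite <- Hm1. apply K; unfold in_Zint; try lia; lra.
    - assert (Hx'm : m1 <= f x') by (apply Hmin1; lia).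
      destruct (Z.eq_dec y1 zs) as [E|E].
      + pose proof (keyL _ g C HEg HIg HC (- x') (- zs) (- y2)) as K.
        unfold g in K. rewrite !Z.opp_involutive in K.
        assert (f y2 >= f x') by (apply K; unfold in_Zint; try lia; lra). lra.
      + pose proof (keyL _ g C HEg HIg HC (- y1) (- zs) (- y2)) as K.
        unfold g in K. rewrite !Z.opp_involutive in K.
        rewrite <- Hm1. apply K; unfold in_Zint; try lia; lra.
    - lia. }
  assert (m1 <= m2) by lra. lra.
Qed.
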